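(* Let $Q(z)=\sum_{i=0}^N a_iz^{N-i}$ ($a_0=1$) be a monic complex polynomial of degree $N\ge2$ with multiset of roots $S=\{\alpha_1,\dots,\alpha_N\}$. Then, with all equivalences $\sim$ holding up to positive constants depending only on $N$: (i) there is a root $\alpha\in S$ with $L_i(\alpha)\sim L_i$ for all integers $0\le i\le N/2$; (ii) for all integers $1\le r\le N/2$, $\Delta_r(\alpha_1,\dots,\alpha_N)\sim L_0L_1\cdots L_{r-1}$; (iii) for each such $r$ there exist a positive integer $h$ and polynomials $D_{r,1},\dots,D_{r,h}\in\mathbb{Z}[A_1,\dots,A_N]$ (depending only on $N,r$) such that $\Delta_r(\alpha_1,\dots,\alpha_N)\sim\sum_{q=1}^h|D_{r,q}(a_1,\dots,a_N)|^{1/q}$ for all such $Q$; (iv) for each $0\le k\le N-2$ there exist a positive integer $m_k$ and polynomials $\sigma_{k,i}\in\mathbb{Z}[A_1,\dots,A_N,Z]$, $1\le i\le m_k$ (depending only on $N,k$), such that for every root $\alpha$ of $Q$, $$\prod_{0\le i\le k}L_i(\alpha)\sim\sum_{i=1}^{m_k}|\sigma_{k,i}(a_1,\dots,a_N;\alpha)|^{1/i}.$$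
   Context: For a set $A\subseteq\mathbb{C}$, $d(A)=\sup_{\alpha,\beta\in A}|\alpha-\beta|$. Local cluster scales: for $\alpha\in S$ and $0\le k\le N-1$, $L_k(\alpha)=\inf d(S_{N-k}(\alpha))$ over sub-multisets $S_{N-k}(\alpha)\subseteq S$ with $N-k$ elements containing $\alpha$. Absolute cluster scales: $L_k=\inf_{\alpha\in S}L_k(\alpha)$, equivalently the minimum of $d(S_{N-k})$ over sub-multisets of $S$ with $N-k$ elements. The $r$-discriminant: $\Delta_r(\alpha_1,\dots,\alpha_N)=\sup\prod_{\nu=1}^r|\alpha_{i_\nu}-\alpha_{j_\nu}|$, the supremum over all $2r$-tuples $(i_1,\dots,i_r,j_1,\dots,j_r)$ of pairwise distinct integers in $\{1,\dots,N\}$. *)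

(* Defs.v *)
From HB Require Import structures.
From mathcomp Require Import all_boot all_order all_algebra.
From mathcomp Require Import complex.
From mathcomp Require Import Rstruct.
From mathcomp Require Import mathcomp_extra reals exp.
From mathcomp Require mpoly.
Set Implicit Arguments. Unset Strict Implicit. Unset Printing Implicit Defensive.
Import Order.TTheory GRing.Theory Num.Theory.
Local Open Scope ring_scope.

Notation RR := Rdefinitions.R.
Notation CC := (RR[i]).

Definition cnorm (x : CC) : RR := Normc.normc x.
Definition cdist (x y : CC) : RR := cnorm (x - y).

Section Defs.
Variable N : nat.
Implicit Types (al : 'I_N -> CC) (s : {set 'I_N}).

Definition diam al s : RR :=
  \big[Num.max/0]_(i in s) \big[Num.max/0]_(j in s) cdist (al i) (al j).

(* The seed diam al setT is an upper bound of every candidate, so for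
   k <= N-1 (nonempty family) this is exactly the minimum. *)
Definition Lloc al (k : nat) (j : 'I_N) : RR :=
  \big[Num.min/diam al setT]_(s : {set 'I_N} | (#|s| == N - k)%N && (j \in s))
     diam al s.

Definition Labs al (k : nat) : RR :=
  \big[Num.min/diam al setT]_(j : 'I_N) Lloc al k j.

(* r-discriminant: sup over injective t : 'I_(r+r) -> 'I_N,
   i_nu = t (lshift r nu), j_nu = t (rshift r nu) *)
Definition rdisc al (r : nat) : RR :=
  \big[Num.max/0]_(t : {ffun 'I_(r + r) -> 'I_N} | injectiveb t)
     \prod_(nu < r) cdist (al (t (lshift r nu))) (al (t (rshift r nu))).

Definition polyQ al : {poly CC} := \prod_(i < N) ('X - (al i)%:P).

(* coefficient vector (a_1, ..., a_N): index k : 'I_N stands for a_(k+1),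
   the coefficient of z^(N-(k+1)) *)
Definition coefs al (k : 'I_N) : CC := (polyQ al)`_(N - k.+1).

Definition evalA al (D : mpoly.mpoly N int) : CC :=
  mpoly.mmap (fun z : int => z%:~R) (coefs al) D.

Definition evalAZ al (z : CC) (D : mpoly.mpoly N.+1 int) : CC :=
  mpoly.mmap (fun c : int => c%:~R)
    (fun k : 'I_N.+1 => if unlift ord_max k is Some k' then coefs al k' else z) D.
End Defs.

Definition sim (c1 c2 A B : RR) : Prop := c1 * B <= A /\ A <= c2 * B.

Definition rootq (x : RR) (q : nat) : RR := powR x (q%:R)^-1.

(* Main.v *)
Require Import Defs.
From HB Require Import structures.
From mathcomp Require Import all_boot all_order all_algebra.
From mathcomp Require Import complex.
From mathcomp Require Import Rstruct.
From mathcomp Require Import mathcomp_extra reals exp.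
From mathcomp Require mpoly.
From mathcomp Require Import zify ring lra.
From mathcomp Require Import fingroup perm.
Import Order.TTheory GRing.Theory Num.Theory.
Local Open Scope ring_scope.
Set Implicit Arguments. Unset Strict Implicit. Unset Printing Implicit Defensive.
Lemma cnorm_ge0 x : 0 <= cnorm x.
Proof. by case: x => a b; rewrite /cnorm /Normc.normc sqrtr_ge0. Qed.
Lemma cnormD x y : cnorm (x + y) <= cnorm x + cnorm y.
Proof. exact: (@le_normcD RR x y). Qed.
Lemma cnormN x : cnorm (- x) = cnorm x.
Proof. exact: (@normcN RR x). Qed.
Lemma cnormM x y : cnorm (x * y) = cnorm x * cnorm y.
Proof. exact: Normc.normcM. Qed.
Lemma cnorm0 : cnorm 0 = 0.
Proof. exact: Normc.normc0. Qed.
Lemma cnorm1 : cnorm 1 = 1.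
Proof. exact: Normc.normc1. Qed.
Lemma cnorm_prod (I : Type) (r : seq I) (P : pred I) (F : I -> CC) :
  cnorm (\prod_(i <- r | P i) F i) = \prod_(i <- r | P i) cnorm (F i).
Proof. by apply: (big_morph cnorm cnormM cnorm1). Qed.
Lemma cnormX x n : cnorm (x ^+ n) = cnorm x ^+ n.
Proof. by elim: n => [|n IH]; rewrite ?expr0 ?cnorm1 // !exprS cnormM IH. Qed.
Lemma cnorm_sum (I : Type) (r : seq I) (P : pred I) (F : I -> CC) :
  cnorm (\sum_(i <- r | P i) F i) <= \sum_(i <- r | P i) cnorm (F i).
Proof.
elim/big_rec2: _ => [|i y1 y2 _ h]; first by rewrite cnorm0.
by apply: le_trans (cnormD _ _) _; rewrite lerD2l.
Qed.

Lemma cdist_ge0 x y : 0 <= cdist x y. Proof. exact: cnorm_ge0. Qed.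
Lemma cdistC x y : cdist x y = cdist y x.
Proof. by rewrite /cdist -cnormN opprB. Qed.
Lemma cdist_tri x y z : cdist x z <= cdist x y + cdist y z.
Proof. by rewrite /cdist; apply: le_trans (cnormD _ _); rewrite addrA subrK. Qed.
Lemma cdistxx x : cdist x x = 0.
Proof. by rewrite /cdist subrr cnorm0. Qed.

Lemma bigmax_leP (I : finType) (P : pred I) (F : I -> RR) c :
  0 <= c -> (forall i, P i -> F i <= c) -> \big[Num.max/0]_(i | P i) F i <= c.
Proof. by move=> c0 h; elim/big_ind: _ => // x y hx hy; rewrite ge_max hx hy. Qed.
Lemma le_bigmaxP (I : finType) (P : pred I) (F : I -> RR) i :
  P i -> F i <= \big[Num.max/0]_(i | P i) F i.
Proof. by move=> Pi; rewrite (bigD1 i) //= le_max lexx. Qed.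
Lemma bigmax_ge0 (I : finType) (P : pred I) (F : I -> RR) :
  0 <= \big[Num.max/0]_(i | P i) F i.
Proof. by elim/big_rec: _ => // i x _ hx; rewrite le_max hx orbT. Qed.
Lemma bigmin_leP (I : finType) (P : pred I) (F : I -> RR) x0 i :
  P i -> \big[Num.min/x0]_(i | P i) F i <= F i.
Proof. by move=> Pi; rewrite (bigD1 i) //= ge_min lexx. Qed.
Lemma bigmin_ex (I : finType) (P : pred I) (F : I -> RR) x0 i :
  P i -> (forall j, P j -> F j <= x0) ->
  exists2 j, P j & \big[Num.min/x0]_(i | P i) F i = F j.
Proof.
move=> Pi hx.
have : (\big[Num.min/x0]_(i | P i) F i == x0) ||
       [exists j, P j && (\big[Num.min/x0]_(i | P i) F i == F j)].
  elim/big_ind: _; first by rewrite eqxx.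
    by move=> x y h1 h2; rewrite /Num.min; case: ltP.
  by move=> j Pj; apply/orP; right; apply/existsP; exists j; rewrite Pj eqxx.
case/orP=> [/eqP e|/existsP[j /andP[Pj /eqP e]]]; last by exists j.
exists i => //; apply/le_anti; rewrite bigmin_leP //= e hx //.
Qed.

Lemma cardsD1_in (T : finType) (A : {set T}) b : b \in A -> #|A :\ b| = #|A|.-1.
Proof. by move=> bA; rewrite (cardsD1 b A) bA. Qed.
Lemma cardsU1_notin (T : finType) (A : {set T}) b : b \notin A -> #|b |: A| = #|A|.+1.
Proof. by move=> bA; rewrite cardsU1 bA. Qed.

Section Geo.
Variable N : nat.
Implicit Types (al : 'I_N -> CC) (s : {set 'I_N}).

Lemma diam_ge0 al s : 0 <= diam al s.
Proof. exact: bigmax_ge0. Qed.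
Lemma diam_le al s c : 0 <= c ->
  (forall i j, i \in s -> j \in s -> cdist (al i) (al j) <= c) -> diam al s <= c.
Proof.
move=> c0 h; apply: bigmax_leP => // i si; apply: bigmax_leP => // j sj; exact: h.
Qed.
Lemma diam_ge al s i j : i \in s -> j \in s -> cdist (al i) (al j) <= diam al s.
Proof.
move=> si sj; apply: le_trans (le_bigmaxP _ si); exact: le_bigmaxP.
Qed.
Lemma diam_sub al s1 s2 : s1 \subset s2 -> diam al s1 <= diam al s2.
Proof.
move=> /subsetP h; apply: diam_le => [|i j si sj]; first exact: diam_ge0.
by apply: diam_ge; apply: h.
Qed.
Lemma diam_setT al s : diam al s <= diam al setT.
Proof. by apply: diam_sub; apply: subsetT. Qed.

Lemma Lloc_le al k j s : #|s| = (N - k)%N -> j \in s -> Lloc al k j <= diam al s.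
Proof. by move=> hs js; apply: bigmin_leP; rewrite hs eqxx js. Qed.

Lemma sub_card (C : {set 'I_N}) j n : j \in C -> (1 <= n <= #|C|)%N ->
  exists2 s : {set 'I_N}, s \subset C & (#|s| = n /\ j \in s).
Proof.
move=> jC; move: {2}#|C| (leqnn #|C|) => m; elim: m C jC => [|m IH] C jC hC hn.
  by move: hC; rewrite leqn0 => /eqP/cards0_eq Ce; rewrite Ce inE in jC.
case/andP: hn => n1; rewrite leq_eqVlt => /orP[/eqP e|hlt].
  by exists C => //; split.
have : exists2 x, x \in C & x != j.
  have : (0 < #|C :\ j|)%N.
    by move: hlt; rewrite (cardsD1 j C) jC add1n ltnS; apply: leq_trans.
  by case/card_gt0P => x; rewrite !inE => /andP[xj xC]; exists x.
case=> x xC xj.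
have jCx : j \in C :\ x by rewrite !inE eq_sym xj.
have hCx : (#|C :\ x| <= m)%N by rewrite -ltnS (cardsD1 x C) xC in hC.
have hnx : (1 <= n <= #|C :\ x|)%N.
  by rewrite n1 /= -ltnS; move: hlt; rewrite (cardsD1 x C) xC add1n.
have [s sC [sn js]] := IH (C :\ x) jCx hCx hnx.
exists s => //; apply: subset_trans sC _; apply: subsetDl.
Qed.

Lemma Lloc_ex al k j : (k < N)%N ->
  exists s, [/\ #|s| = (N - k)%N, j \in s & Lloc al k j = diam al s].
Proof.
move=> kN.
have [s _ [sn js]] := @sub_card setT j (N - k) (in_setT j)
  (ltac:(by rewrite cardsT card_ord subn_gt0 kN leq_subr)).
have Ps : (#|s| == N - k)%N && (j \in s) by rewrite sn eqxx js.
have [s' /andP[/eqP s'n js'] e] :=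
  @bigmin_ex _ (fun s : {set 'I_N} => (#|s| == N - k)%N && (j \in s))
             (diam al) (diam al setT) s Ps (fun s _ => diam_setT al s).
by exists s'; split.
Qed.

Lemma Lloc_ge0 al k j : 0 <= Lloc al k j.
Proof.
apply: (big_ind (fun x : RR => 0 <= x)); first exact: diam_ge0.
  by move=> x y hx hy; rewrite le_min hx hy.
by move=> s _; exact: diam_ge0.
Qed.

Lemma Labs_le al k j : Labs al k <= Lloc al k j.
Proof. exact: bigmin_leP. Qed.

Lemma Labs_ge0 al k : 0 <= Labs al k.
Proof.
apply: (big_ind (fun x : RR => 0 <= x)); first exact: diam_ge0.
  by move=> x y hx hy; rewrite le_min hx hy.
by move=> i _; exact: Lloc_ge0.
Qed.

Lemma Lloc_le_setT al k j : Lloc al k j <= diam al setT.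
Proof.
apply: (big_ind (fun x : RR => x <= diam al setT)) => //.
  by move=> x y hx hy; rewrite ge_min hx.
by move=> s _; exact: diam_setT.
Qed.

Lemma Labs_ex al k : (k < N)%N ->
  exists s, #|s| = (N - k)%N /\ Labs al k = diam al s.
Proof.
move=> kN; have j : 'I_N by exists 0%N; apply: leq_ltn_trans kN.
have [j' _ e] := @bigmin_ex _ xpredT (Lloc al k) (diam al setT) j isT
                   (fun j _ => Lloc_le_setT al k j).
have [s [sn _ e2]] := Lloc_ex al j' kN.
by exists s; split => //; rewrite /Labs e e2.
Qed.

Lemma Labs_le_set al k s : (k < N)%N -> #|s| = (N - k)%N -> Labs al k <= diam al s.
Proof.
move=> kN sn; have : (0 < #|s|)%N by rewrite sn subn_gt0.
case/card_gt0P => j js; apply: le_trans (Labs_le al k j) _.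
exact: Lloc_le.
Qed.

Lemma Labs_mono al i m : (i <= m)%N -> (m < N)%N -> Labs al m <= Labs al i.
Proof.
move=> im mN; have iN : (i < N)%N by apply: leq_ltn_trans mN.
have [s [sn e]] := Labs_ex al iN.
have : (0 < #|s|)%N by rewrite sn subn_gt0.
case/card_gt0P => j js.
have [s' s's [s'n _]] := @sub_card s j (N - m) js
  (ltac:(by rewrite sn subn_gt0 mN /= leq_sub2l)).
rewrite e; apply: le_trans (Labs_le_set al mN s'n) _; exact: diam_sub.
Qed.

End Geo.
Section Geo2.
Variable N : nat.
Implicit Types (al : 'I_N -> CC) (s : {set 'I_N}).

Lemma diam_lt al s c : 0 < c ->
  (forall i j, i \in s -> j \in s -> cdist (al i) (al j) < c) -> diam al s < c.
Proof.
move=> c0 h; apply: (big_ind (fun x : RR => x < c)) => //.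
  by move=> x y hx hy; rewrite gt_max hx hy.
move=> i si; apply: (big_ind (fun x : RR => x < c)) => //.
  by move=> x y hx hy; rewrite gt_max hx hy.
by move=> j sj; apply: h.
Qed.

Lemma card_leN (A : {set 'I_N}) : (#|A| <= N)%N.
Proof. by rewrite -[X in (_ <= X)%N]card_ord max_card. Qed.

Definition Far al i j := [set b | (b != j) && (Lloc al i j <= 2 * cdist (al j) (al b))].

Lemma Far_card al i j : (i.+2 <= N)%N -> (i.+1 <= #|Far al i j|)%N.
Proof.
move=> iN; rewrite leqNgt; apply/negP => hF.
have [L0|Lpos] := eqVneq (Lloc al i j) 0.
  have : [set b | b != j] \subset Far al i j.
    by apply/subsetP => b; rewrite !inE => ->; rewrite L0 mulr_ge0 ?cdist_ge0.
  have -> : [set b | b != j] = [set~ j] by apply/setP => x; rewrite !inE.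
  move/subset_leq_card; rewrite cardsC1 card_ord.
  by move=> h; move: (leq_trans h hF); lia.
have Lp : 0 < Lloc al i j by rewrite lt_def Lpos Lloc_ge0.
have jC : j \in ~: Far al i j by rewrite !inE eqxx.
have hC : (N - i <= #|~: Far al i j|)%N.
  move: (cardsC (Far al i j)); rewrite card_ord => e.
  by move: hF e; lia.
have [s sC [sn js]] := @sub_card N _ j (N - i) jC (ltac:(rewrite hC; lia)).
have near x : x \in s -> 2 * cdist (al j) (al x) < Lloc al i j.
  move=> xs; have [-> | xj] := eqVneq x j; first by rewrite cdistxx mulr0.
  move/subsetP: sC => /(_ x xs); rewrite !inE xj /= -ltNge; done.
have : diam al s < Lloc al i j.
  apply: diam_lt => // x y xs ys; apply: le_lt_trans (cdist_tri _ (al j) _) _.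
  move: (near x xs) (near y ys); rewrite cdistC; lra.
by rewrite ltNge Lloc_le.
Qed.

Lemma part_i al : (2 <= N)%N -> exists j : 'I_N,
  forall i, (i.*2 <= N)%N -> Lloc al i j <= 2 * Labs al i.
Proof.
move=> N2; set m := N./2.
have mN : (m < N)%N by rewrite /m; rewrite -divn2; apply: ltn_Pdiv => //; lia.
have [Sm [Smn Sme]] := Labs_ex al mN.
have : (0 < #|Sm|)%N by rewrite Smn subn_gt0.
case/card_gt0P => j jSm; exists j => i hi.
have im : (i <= m)%N by rewrite /m -divn2 leq_divRL //; lia.
have iN : (i < N)%N by apply: leq_ltn_trans mN.
have Li0 := Labs_ge0 al i.
have [-> | ilt] := eqVneq i m.
  by apply: le_trans (Lloc_le al Smn jSm) _; rewrite -Sme; have := Labs_ge0 al m; lra.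
have ilm : (i < m)%N by rewrite ltn_neqAle ilt im.
have [Si [Sin Sie]] := Labs_ex al iN.
have [jSi|jSi] := boolP (j \in Si).
  by apply: le_trans (Lloc_le al Sin jSi) _; rewrite -Sie; lra.
have : (0 < #|Si :&: Sm|)%N.
  have h1 := cardsU Si Sm.
  have h2 : (#|Si :|: Sm| <= N)%N by rewrite -[X in (_ <= X)%N]card_ord max_card.
  have : (2 * m <= N)%N by rewrite /m -divn2; rewrite mulnC; apply: leq_trunc_div.
  by move: h1 h2 ilm; rewrite Sin Smn; clearbody m; lia.
case/card_gt0P => b; rewrite inE => /andP[bSi bSm].
set s' := j |: (Si :\ b).
have s'n : #|s'| = (N - i)%N.
  rewrite cardsU1_notin; last by rewrite !inE negb_and jSi orbT.
  rewrite cardsD1_in // Sin; lia.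
apply: le_trans (Lloc_le al s'n (setU11 _ _)) _.
have Lmi := Labs_mono al (ltnW ilm) mN.
have Lm0 := Labs_ge0 al m.
have dj x : x \in Si -> cdist (al j) (al x) <= Labs al i + Labs al m.
  move=> xSi; apply: le_trans (cdist_tri _ (al b) _) _.
  rewrite addrC; apply: lerD.
    by rewrite Sie; apply: diam_ge.
  by rewrite Sme; apply: diam_ge.
apply: le_trans (_ : diam al s' <= Labs al i + Labs al m) _; last lra.
apply: diam_le; first lra.
move=> x y; rewrite !inE => /orP[/eqP->|/andP[_ xS]] /orP[/eqP->|/andP[_ yS]].
- by rewrite cdistxx; lra.
- exact: dj.
- by rewrite cdistC; exact: dj.
- apply: (@le_trans _ _ (Labs al i)); first by rewrite Sie; apply: diam_ge.
  lra.
Qed.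

Definition pj al j (T : {set 'I_N}) := \prod_(b in T) cdist (al j) (al b).

Lemma pj_ge0 al j T : 0 <= pj al j T.
Proof. by apply: prodr_ge0 => b _; exact: cdist_ge0. Qed.

Lemma pj_upper al j n (T : {set 'I_N}) : #|T| = n -> pj al j T <= \prod_(i < n) Lloc al i j.
Proof.
elim: n T => [|n IH] T Tn.
  by rewrite /pj (cards0_eq Tn) big_set0 big_ord0.
have nN : (n < N)%N by rewrite -Tn; apply: card_leN.
have [S [Sn jS Se]] := Lloc_ex al j nN.
have : (0 < #|T :&: S|)%N.
  have h1 := cardsU T S.
  have h2 := card_leN (T :|: S).
  by move: h1 h2; rewrite Tn Sn; lia.
case/card_gt0P => b; rewrite inE => /andP[bT bS].
rewrite /pj (bigD1 b) //= big_ord_recr /= mulrC.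
apply: ler_pM.
- by apply: prodr_ge0 => x _; exact: cdist_ge0.
- exact: cdist_ge0.
- have -> : \prod_(i in T | i != b) cdist (al j) (al i) = pj al j (T :\ b).
    by rewrite /pj; apply: eq_bigl => x; rewrite !inE andbC.
  by apply: IH; rewrite cardsD1_in // Tn.
- by rewrite Se; apply: diam_ge.
Qed.

Lemma pj_lower al j m : (m < N)%N ->
  exists T : {set 'I_N}, #|T| = m /\ \prod_(i < m) Lloc al i j <= 2 ^+ m * pj al j T.
Proof.
elim: m => [|m IH] mN.
  by exists set0; rewrite cards0 big_ord0 /pj big_set0 expr0 mulr1.
have [T [Tn Tb]] := IH (ltnW mN).
have : (0 < #|Far al m j :\: T|)%N.
  rewrite cardsD; have h1 := Far_card al j mN.
  have h2 := subset_leq_card (subsetIr (Far al m j) T).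
  by move: h1 h2; rewrite Tn; lia.
case/card_gt0P => b; rewrite !inE => /andP[bT /andP[_ hb]].
exists (b |: T); split; first by rewrite cardsU1_notin // Tn.
rewrite big_ord_recr /= /pj (bigD1 b) ?setU11 //=.
have -> : \prod_(i in b |: T | i != b) cdist (al j) (al i) = pj al j T.
  rewrite /pj; apply: eq_bigl => x; rewrite !inE.
  by case: (eqVneq x b) => [->|xb] /=; rewrite ?(negPf bT) ?andbT.
rewrite exprS.
have := pj_ge0 al j T; have := cdist_ge0 (al j) (al b).
have := Lloc_ge0 al m j.
have : 0 <= \prod_(i < m) Lloc al i j by apply: prodr_ge0 => i _; exact: Lloc_ge0.
move: Tb hb; set P := \prod_(i < m) _; set Q := pj _ _ _; set d := cdist _ _.
set L := Lloc _ _ _; set E := 2 ^+ m.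
have E0 : 0 <= E by rewrite /E exprn_ge0.
move=> h1 h2 h3 h4 h5 h6.
have : P * L <= (E * Q) * (2 * d) by apply: ler_pM.
by move=> h; apply: le_trans h _; rewrite le_eqVlt; apply/orP; left; apply/eqP; ring.
Qed.

End Geo2.
Section Disc.
Variable N : nat.
Implicit Types (al : 'I_N -> CC) (s : {set 'I_N}).

Definition pdist al r (t : {ffun 'I_(r + r) -> 'I_N}) (nu : 'I_r) :=
  cdist (al (t (lshift r nu))) (al (t (rshift r nu))).

Lemma lshift_inj r (x y : 'I_r) : lshift r x = lshift r y -> x = y.
Proof. by move/(congr1 val) => /= /val_inj. Qed.
Lemma rshift_inj r (x y : 'I_r) : rshift r x = rshift r y -> x = y.
Proof. by move/(congr1 val) => /= /eqP; rewrite eqn_add2l => /eqP/val_inj. Qed.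
Lemma lrshift_neq r (x y : 'I_r) : lshift r x <> rshift r y.
Proof. by move/(congr1 val) => /= e; move: (ltn_ord x); rewrite e; lia. Qed.

Lemma disc_upper al r (t : {ffun 'I_(r + r) -> 'I_N}) n (A : {set 'I_r}) :
  injective t -> #|A| = n -> \prod_(nu in A) pdist al t nu <= \prod_(i < n) Labs al i.
Proof.
move=> tinj; have rN : (r + r <= N)%N.
  by have := @leq_card _ _ t tinj; rewrite !card_ord.
elim: n A => [|n IH] A An.
  by rewrite (cards0_eq An) big_set0 big_ord0.
have nr : (n < r)%N by rewrite -An; have := max_card A; rewrite card_ord.
have nN : (n < N)%N by lia.
have [S [Sn Se]] := Labs_ex al nN.
have [|] := boolP [exists nu in A, (t (lshift r nu) \in S) && (t (rshift r nu) \in S)];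
  last first.
  move/existsPn => h; exfalso.
  pose g nu := if t (lshift r nu) \in S then t (rshift r nu) else t (lshift r nu).
  have ginj : {in A &, injective g}.
    move=> x y _ _; rewrite /g.
    case: ifP => _; case: ifP => _ /tinj;
      by [move/rshift_inj | move/lrshift_neq | move/esym/lrshift_neq | move/lshift_inj].
  have gS : [set g x | x in A] \subset ~: S.
    apply/subsetP => z /imsetP[x xA ->]; rewrite inE /g.
    move: (h x); rewrite xA /=; case: ifP => H /=; [exact: id | by rewrite H].
  have := subset_leq_card gS; rewrite card_in_imset // An.
  rewrite -(leq_add2l #|S|) cardsC Sn card_ord; lia.
case/existsP => nu /andP[nuA /andP[h1 h2]].
rewrite (bigD1 nu) //= big_ord_recr /= mulrC.
apply: ler_pM.
- by apply: prodr_ge0 => x _; exact: cdist_ge0.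
- exact: cdist_ge0.
- have -> : \prod_(i in A | i != nu) pdist al t i = \prod_(i in A :\ nu) pdist al t i.
    by apply: eq_bigl => x; rewrite !inE andbC.
  by apply: IH; rewrite cardsD1_in // An.
- by rewrite Se; apply: diam_ge.
Qed.

Lemma rdisc_upper al r : rdisc al r <= \prod_(i < r) Labs al i.
Proof.
apply: bigmax_leP; first by apply: prodr_ge0 => i _; exact: Labs_ge0.
move=> t /injectiveP tinj.
have := @disc_upper al r t r setT tinj (ltac:(by rewrite cardsT card_ord)).
by rewrite (eq_bigl xpredT) // => nu; rewrite in_setT.
Qed.

Definition okp r (a b : nat -> 'I_N) :=
  [/\ forall mu nu, (mu < r)%N -> (nu < r)%N -> a mu != b nu,
      forall mu nu, (mu < r)%N -> (nu < r)%N -> mu != nu -> a mu != a nu &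
      forall mu nu, (mu < r)%N -> (nu < r)%N -> mu != nu -> b mu != b nu].

Definition bnd al r (a b : nat -> 'I_N) K :=
  forall mu, (mu < r)%N -> Labs al mu <= K * cdist (al (a mu)) (al (b mu)).

Lemma okp_sym r a b : okp r a b -> okp r b a.
Proof. by case=> h1 h2 h3; split=> // mu nu hm hn; rewrite eq_sym; apply: h1. Qed.
Lemma bnd_sym al r a b K : bnd al r a b K -> bnd al r b a K.
Proof. by move=> h mu hm; rewrite cdistC; apply: h. Qed.

Lemma pow2_ge1 n : 1 <= (2 : RR) ^+ n.
Proof. by rewrite exprn_ege1 // ler1n. Qed.

Lemma augment al r a b nu u v :
  okp r a b -> bnd al r a b (2 ^+ r.+1) -> (nu < r)%N ->
  (forall mu, (mu < r)%N -> [&& u != a mu, u != b mu, v != a mu & v != b mu]) ->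
  u != v -> 4 * cdist (al u) (al v) <= Labs al r ->
  Labs al r <= 2 * cdist (al u) (al (b nu)) ->
  cdist (al u) (al (b nu)) <= cdist (al u) (al (a nu)) ->
  exists a' b', okp r.+1 a' b' /\ bnd al r.+1 a' b' (2 ^+ r.+2).
Proof.
move=> [hab haa hbb] hB nur huv uv h4 h2 hd.
exists (fun mu => if mu == r then v else a mu).
exists (fun mu => if mu == r then b nu else if mu == nu then u else b mu).
have nunr : nu != r by rewrite ltn_eqF.
split.
  split=> mu mu' hm hm'; rewrite ltnS leq_eqVlt in hm; rewrite ltnS leq_eqVlt in hm'.
  - case: (mu =P r) hm => [->|/eqP mr] /= hm; case: (mu' =P r) hm' => [->|/eqP m'r] /= hm'.
    + by case/and4P: (huv nu nur).
    + case: (mu' =P nu) => [_|_]; first by rewrite eq_sym.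
      by case/and4P: (huv mu' hm').
    + by apply: hab.
    + case: (mu' =P nu) => [_|_]; last by apply: hab.
      by case/and4P: (huv mu hm) => h1 _ _ _; rewrite eq_sym.
  - move=> mm'; case: (mu =P r) hm mm' => [->|/eqP mr] /= hm mm'; case: (mu' =P r) hm' mm' => [->|/eqP m'r] /= hm' mm'.
    + by rewrite eqxx in mm'.
    + by case/and4P: (huv mu' hm').
    + by rewrite eq_sym; case/and4P: (huv mu hm).
    + by apply: haa.
  - move=> mm'; case: (mu =P r) hm mm' => [->|/eqP mr] /= hm mm'; case: (mu' =P r) hm' mm' => [->|/eqP m'r] /= hm' mm'.
    + by rewrite eqxx in mm'.
    + case: (mu' =P nu) => [_|/eqP m'nu]; first by rewrite eq_sym; case/and4P: (huv nu nur).
      by apply: hbb; rewrite // eq_sym.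
    + case: (mu =P nu) => [_|/eqP mnu]; first by case/and4P: (huv nu nur).
      by apply: hbb.
    + case: (mu =P nu) => [e1|/eqP mnu]; case: (mu' =P nu) => [e2|/eqP m'nu].
      * by rewrite e1 e2 eqxx in mm'.
      * by case/and4P: (huv mu' hm').
      * by rewrite eq_sym; case/and4P: (huv mu hm).
      * by apply: hbb.
have d0 := cdist_ge0.
have e2 : (2 : RR) ^+ r.+2 = 2 * 2 ^+ r.+1 by rewrite exprS.
have p1 := pow2_ge1 r.+1.
move=> mu; rewrite ltnS leq_eqVlt => /orP[/eqP->|hm]; rewrite ?eqxx.
  have t1 := cdist_tri (al u) (al v) (al (b nu)).
  have : (4 : RR) <= 2 ^+ r.+2 by rewrite !exprS; have := pow2_ge1 r; lra.
  have := d0 (al v) (al (b nu)).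
  move=> h0 h4'; apply: le_trans (_ : 4 * cdist (al v) (al (b nu)) <= _).
    lra.
  by apply: ler_wpM2r.
rewrite (ltn_eqF hm).
have hb := hB mu hm.
case: eqP => [->|_].
  have t1 := cdist_tri (al (a nu)) (al u) (al (b nu)).
  have := hB nu nur; rewrite e2 (cdistC (al (a nu)) (al u)) in t1 *.
  move=> h; apply: le_trans h _.
  have A0 : (0 : RR) <= 2 ^+ r.+1 by apply: exprn_ge0.
  nra.
apply: le_trans hb _; rewrite e2.
have := d0 (al (a mu)) (al (b mu)); nra.
Qed.

Lemma match_ex al r : (0 < N)%N -> (r + r <= N)%N ->
  exists a b, okp r a b /\ bnd al r a b (2 ^+ r.+1).
Proof.
move=> N0; elim: r => [|r IH] rN.
  exists (fun _ => @Ordinal N 0 N0), (fun _ => @Ordinal N 0 N0).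
  by split; [split => mu nu | move=> mu].
have [a [b [hok hB]]] := IH (ltac:(lia)).
have hok' := hok; case: hok' => hab haa hbb.
set U := [set a (val nu) | nu : 'I_r] :|: [set b (val nu) | nu : 'I_r].
have inU mu : (mu < r)%N -> (a mu \in U) && (b mu \in U).
  move=> hm; rewrite !inE; apply/andP; split; apply/orP; [left|right];
  by apply/imsetP; exists (Ordinal hm).
have Uc : (#|U| <= r + r)%N.
  apply: leq_trans (leq_card_setU _ _) _; apply: leq_add;
  by apply: leq_trans (leq_imset_card _ _) _; rewrite ?card_ord ?max_card.
have : (1 < #|~: U|)%N by have := cardsC U; rewrite card_ord; lia.
case/card_gt1P => u0 [v0 [u0U v0U u0v0]].
have notU x mu : x \in ~: U -> (mu < r)%N -> (x != a mu) && (x != b mu).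
  rewrite inE => xU hm; case/andP: (inU mu hm) => h1 h2.
  by apply/andP; split; apply: contraNneq xU => ->.
have [|] := boolP [exists x, [exists y, [&& x \in ~: U, y \in ~: U, x != y &
                        Labs al r <= 4 * cdist (al x) (al y)]]].
  case/existsP => x /existsP[y /and4P[xU yU xy hxy]].
  exists (fun mu => if mu == r then x else a mu).
  exists (fun mu => if mu == r then y else b mu).
  split.
    split=> mu mu' hm hm'; rewrite ltnS leq_eqVlt in hm; rewrite ltnS leq_eqVlt in hm'.
    - case: (mu =P r) hm => [->|/eqP mr] /= hm; case: (mu' =P r) hm' => [->|/eqP m'r] /= hm' //.
      + by case/andP: (notU x mu' xU hm').
      + by rewrite eq_sym; case/andP: (notU y mu yU hm).
      + by apply: hab.
    - move=> mm'; case: (mu =P r) hm mm' => [->|/eqP mr] /= hm mm'; case: (mu' =P r) hm' mm' => [->|/eqP m'r] /= hm' mm'.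
      + by rewrite eqxx in mm'.
      + by case/andP: (notU x mu' xU hm').
      + by rewrite eq_sym; case/andP: (notU x mu xU hm).
      + by apply: haa.
    - move=> mm'; case: (mu =P r) hm mm' => [->|/eqP mr] /= hm mm'; case: (mu' =P r) hm' mm' => [->|/eqP m'r] /= hm' mm'.
      + by rewrite eqxx in mm'.
      + by case/andP: (notU y mu' yU hm').
      + by rewrite eq_sym; case/andP: (notU y mu yU hm).
      + by apply: hbb.
  have e2 : (2 : RR) ^+ r.+2 = 2 * 2 ^+ r.+1 by rewrite exprS.
  have p1 := pow2_ge1 r.+1.
  move=> mu; rewrite ltnS leq_eqVlt => /orP[/eqP->|hm]; rewrite ?eqxx.
    apply: le_trans hxy _; apply: ler_wpM2r; first exact: cdist_ge0.
    by rewrite !exprS; have := pow2_ge1 r; lra.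
  rewrite (ltn_eqF hm); apply: le_trans (hB mu hm) _.
  apply: ler_wpM2r; first exact: cdist_ge0.
  by rewrite e2; lra.
move=> hno.
have hsmall x y : x \in ~: U -> y \in ~: U -> x != y -> 4 * cdist (al x) (al y) < Labs al r.
  move=> xU yU xy; rewrite ltNge; apply/negP => h; move/negP: hno; apply.
  by apply/existsP; exists x; apply/existsP; exists y; rewrite xU yU xy h.
have FU : Far al r u0 \subset U.
  apply/subsetP => x; rewrite [x \in Far _ _ _]inE => /andP[xu hx]; apply: contraT => xU.
  have xU' : x \in ~: U by rewrite inE.
  have := hsmall u0 x u0U xU' (ltac:(by rewrite eq_sym)).
  have := Labs_le al r u0; have := cdist_ge0 (al u0) (al x); lra.
have Fc := Far_card al u0 (ltac:(lia) : (r.+2 <= N)%N).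
have : exists2 nu, (nu < r)%N & (a nu \in Far al r u0) && (b nu \in Far al r u0).
  have [|] := boolP [exists nu : 'I_r, (a nu \in Far al r u0) && (b nu \in Far al r u0)].
    by case/existsP => nu h; exists nu.
  move/existsPn => h; exfalso.
  have r0 : (0 < r)%N by have := subset_leq_card FU; lia.
  pose g x := odflt (Ordinal r0) [pick nu : 'I_r | (a nu == x) || (b nu == x)].
  have gP x : x \in U -> (a (g x) == x) || (b (g x) == x).
    rewrite !inE => hx; rewrite /g; case: pickP => //= hn.
    case/orP: hx => /imsetP[nu _ e]; by move: (hn nu); rewrite e eqxx ?orbT.
  have ginj : {in Far al r u0 &, injective g}.
    move=> x y xF yF gxy; apply/eqP; apply: contraT => xy.
    have xU := subsetP FU x xF; have yU := subsetP FU y yF.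
    move: (gP x xU) (gP y yU) (h (g x)); rewrite -gxy.
    case/orP=> /eqP e1; case/orP=> /eqP e2; rewrite e1 ?e2 ?xF ?yF //.
    + by move: xy; rewrite -e1 -e2 eqxx.
    + by move: xy; rewrite -e1 -e2 eqxx.
  have := leq_imset_card g (Far al r u0).
  have := max_card [set g x | x in Far al r u0]; rewrite card_ord card_in_imset //.
  lia.
case=> nu nur /andP[faF fbF].
move: faF fbF; rewrite !inE => /andP[_ fa] /andP[_ fb].
have huv mu : (mu < r)%N -> [&& u0 != a mu, u0 != b mu, v0 != a mu & v0 != b mu].
  by move=> hm; case/andP: (notU u0 mu u0U hm) => -> ->; case/andP: (notU v0 mu v0U hm) => -> ->.
have h4 : 4 * cdist (al u0) (al v0) <= Labs al r by apply/ltW/hsmall.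
have LL := Labs_le al r u0.
case: (leP (cdist (al u0) (al (b nu))) (cdist (al u0) (al (a nu)))) => hd.
  apply: (augment hok hB nur huv u0v0 h4) => //; lra.
apply: (augment (okp_sym hok) (bnd_sym hB) nur) (u0v0) (h4) _ _ => //.
- by move=> mu hm; case/and4P: (huv mu hm) => -> -> -> ->.
- lra.
- exact: ltW.
Qed.

Lemma rdisc_lower al r : (0 < N)%N -> (r + r <= N)%N ->
  \prod_(i < r) Labs al i <= (2 ^+ r.+1) ^+ r * rdisc al r.
Proof.
move=> N0 rN; have [a [b [[hab haa hbb] hB]]] := match_ex al N0 rN.
pose t := [ffun i : 'I_(r + r) => if (i < r)%N then a i else b (i - r)%N].
have tinj : injectiveb t.
  apply/injectiveP => x y; rewrite !ffunE.
  have hx' := ltn_ord x; have hy' := ltn_ord y.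
  case: ifP => hx; case: ifP => hy.
  - move=> e; apply/val_inj/eqP; apply: contraT => xy.
    by have := haa _ _ hx hy xy; rewrite e eqxx.
  - move=> e; have := hab x (y - r)%N hx (ltac:(lia)); by rewrite e eqxx.
  - move=> e; have := hab y (x - r)%N hy (ltac:(lia)); by rewrite e eqxx.
  - move=> e; apply/val_inj/eqP; apply: contraT => xy.
    have xy' : (x - r)%N != (y - r)%N.
      apply: contra xy => /eqP h; change (nat_of_ord x == nat_of_ord y); apply/eqP.
      move: hx hy; rewrite !ltnNge => /negbFE hx /negbFE hy; lia.
    have hx2 : (x - r < r)%N by lia.
    have hy2 : (y - r < r)%N by lia.
    by have := hbb _ _ hx2 hy2 xy'; rewrite e eqxx.
have : \prod_(nu < r) cdist (al (a nu)) (al (b nu)) <= rdisc al r.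
  have := @le_bigmaxP _ (fun t : {ffun 'I_(r + r) -> 'I_N} => injectiveb t)
    (fun t : {ffun 'I_(r + r) -> 'I_N} =>
     \prod_(nu < r) cdist (al (t (lshift r nu))) (al (t (rshift r nu)))) t tinj.
  congr (_ <= _); apply: eq_bigr => nu _; rewrite !ffunE /= ltn_ord.
  by rewrite ltnNge leq_addr /= addKn.
move=> h; apply: le_trans (_ : _ <= (2 ^+ r.+1) ^+ r * \prod_(nu < r) cdist (al (a nu)) (al (b nu))) _.
  have -> : (2 ^+ r.+1) ^+ r * \prod_(nu < r) cdist (al (a nu)) (al (b nu)) =
     \prod_(nu < r) (2 ^+ r.+1 * cdist (al (a nu)) (al (b nu))).
    by rewrite prodrMl card_ord.
  apply: ler_prod => i _; rewrite Labs_ge0 /=; exact: hB.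
by apply: ler_wpM2l => //; apply: exprn_ge0; apply: exprn_ge0.
Qed.

End Disc.
Section Cauchy.
Variable I : finType.
Implicit Types (x : I -> CC).

Definition esym x q := \sum_(A : {set I} | #|A| == q) \prod_(i in A) x i.

Lemma card_set_le (A : {set I}) : (#|A| <= #|I|)%N.
Proof. exact: max_card. Qed.

Lemma vieta_zero x i0 :
  \sum_(q < #|I|.+1) (-1) ^+ q * esym x q * (x i0) ^+ (#|I| - q) = 0.
Proof.
set z := x i0; set M := #|I|.
have h0 : \prod_i (- x i + z) = 0.
  by rewrite (bigD1 i0) //= addrC subrr mul0r.
rewrite bigA_distr in h0; apply: (etrans _ h0).
rewrite (partition_big (fun A : {set I} => (inord #|A| : 'I_M.+1)) xpredT) //=.
apply: eq_bigr => q _.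
rewrite /esym mulr_sumr mulr_suml; apply: eq_big => A.
  have hA : (#|A| < M.+1)%N by rewrite ltnS card_set_le.
  apply/eqP/eqP => [e|e].
    by apply: val_inj; rewrite /= inordK // e.
  by rewrite -e inordK.
move=> /eqP eA.
symmetry; rewrite (bigID (mem A)) /=.
have -> : \prod_(i | i \in A) (if i \in A then - x i else z) = \prod_(i in A) - x i.
  by apply: eq_bigr => i ->.
have -> : \prod_(i | i \notin A) (if i \in A then - x i else z) = \prod_(i in ~: A) z.
  by apply: eq_big => i; rewrite ?inE // => /negbTE ->.
rewrite prodrN prodr_const eA.
have -> : #|~: A| = (M - q)%N by have := cardsC A; rewrite eA -/M; lia.
by rewrite -eA.
Qed.

Lemma esym0 x : esym x 0 = 1.
Proof.
rewrite /esym (eq_bigl (fun A => A == set0)); last by move=> A; rewrite cards_eq0.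
by rewrite big_pred1_eq big_set0.
Qed.

Lemma geom_bound (b : RR) M : 0 <= b ->
  \sum_(q < M) b ^+ q.+1 * (2 * b) ^+ (M - q.+1) <= (2 * b) ^+ M - b ^+ M.
Proof.
move=> b0; elim: M => [|M IH]; first by rewrite big_ord0 !expr0 subrr.
rewrite big_ord_recr /= subnn expr0 mulr1.
have -> : \sum_(i < M) b ^+ (widen_ord (leqnSn M) i).+1 * (2 * b) ^+ (M.+1 - (widen_ord (leqnSn M) i).+1)
        = (2 * b) * \sum_(i < M) b ^+ i.+1 * (2 * b) ^+ (M - i.+1).
  rewrite mulr_sumr; apply: eq_bigr => i _ /=.
  have -> : (M.+1 - i.+1 = (M - i.+1).+1)%N by have := ltn_ord i; lia.
  by rewrite [X in _ * X = _]exprS; ring.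
have bM : 0 <= b ^+ M by apply: exprn_ge0.
have hb : 0 <= 2 * b by lra.
have := ler_wpM2l hb IH.
rewrite !exprS; set w := (2 * b) ^+ M; set S := \sum_(_ < _) _; move=> h.
have : b * b ^+ M <= 2 * b * b ^+ M - b * b ^+ M by nra.
lra.
Qed.

Lemma cauchy_bound x (B : RR) : 0 <= B ->
  (forall q, (1 <= q <= #|I|)%N -> cnorm (esym x q) <= B ^+ q) ->
  forall i, cnorm (x i) <= 2 * B.
Proof.
move=> B0 hq i0; rewrite leNgt; apply/negP => hz.
set z := x i0 in hz *; set M := #|I|; set w := cnorm z in hz *.
set b := w / 2.
have bB : B < b by rewrite /b; lra.
have b0 : 0 < b by lra.
have ew : w = 2 * b by rewrite /b; field.
have M0 : (0 < M)%N by apply/card_gt0P; exists i0.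
have := vieta_zero x i0; rewrite -/z -/M big_ord_recl /= expr0 mul1r esym0 mul1r subn0.
move/eqP; rewrite addr_eq0 => /eqP ez.
have : w ^+ M <= \sum_(q < M) b ^+ q.+1 * (2 * b) ^+ (M - q.+1).
  rewrite /w -cnormX ez cnormN; apply: le_trans (cnorm_sum _ _ _) _.
  apply: ler_sum => q _; rewrite /= !cnormM cnormX -/w ew.
  have -> : cnorm ((-1) ^+ q.+1) = 1 by rewrite cnormX cnormN cnorm1 expr1n.
  rewrite mul1r; apply: ler_wpM2r; first by apply: exprn_ge0; lra.
  apply: le_trans (hq q.+1 _) _; first by rewrite ltn_ord.
  by apply: lerXn2r; rewrite ?nnegrE //; lra.
have := geom_bound M (ltW b0); rewrite -ew => h1 h2.
have : 0 < b ^+ M by apply: exprn_gt0.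
lra.
Qed.

Definition mx x := \big[Num.max/0]_i cnorm (x i).

Lemma mx_ge0 x : 0 <= mx x. Proof. exact: bigmax_ge0. Qed.
Lemma mx_ge x i : cnorm (x i) <= mx x. Proof. exact: le_bigmaxP. Qed.

Lemma esym_bound x q : cnorm (esym x q) <= #|{set I}|%:R * mx x ^+ q.
Proof.
apply: le_trans (cnorm_sum _ _ _) _.
apply: le_trans (_ : _ <= \sum_(A : {set I} | #|A| == q) mx x ^+ q) _.
  apply: ler_sum => A /eqP Aq; rewrite cnorm_prod -Aq -prodr_const.
  apply: ler_prod => i _; rewrite cnorm_ge0; exact: mx_ge.
rewrite sumr_const -(mulr_natr (mx x ^+ q)) mulrC.
apply: (ler_wpM2r (exprn_ge0 q (mx_ge0 x))).
by rewrite ler_nat max_card.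
Qed.

End Cauchy.
Lemma rootq_ge0 x q : 0 <= rootq x q.
Proof. exact: powR_ge0. Qed.

Lemma rootqX x q : 0 <= x -> (0 < q)%N -> rootq x q ^+ q = x.
Proof.
move=> x0 q0; rewrite /rootq -powR_mulrn ?powR_ge0 // -powRrM mulVf ?powRr1 //.
by rewrite pnatr_eq0 -lt0n.
Qed.

Lemma rootq_le x q B : 0 <= x -> 0 <= B -> (0 < q)%N -> x <= B ^+ q -> rootq x q <= B.
Proof.
move=> x0 B0 q0 h; rewrite leNgt; apply/negP => hlt.
have : B ^+ q < rootq x q ^+ q by rewrite ltrXn2r ?rootq_ge0 // -lt0n q0.
by rewrite rootqX // ltNge h.
Qed.

Section Family.
Variable I : finType.
Variable x : I -> CC.

Definition Ssum := \sum_(q < #|I|) rootq (cnorm (esym x q.+1)) q.+1.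

Lemma Ssum_ge0 : 0 <= Ssum.
Proof. by apply: sumr_ge0 => q _; exact: rootq_ge0. Qed.

Lemma mx_le_Ssum : mx x <= 2 * Ssum.
Proof.
apply: bigmax_leP; first by have := Ssum_ge0; lra.
move=> i _; apply: cauchy_bound; first exact: Ssum_ge0.
move=> q /andP[q1 qM].
have -> : cnorm (esym x q) = rootq (cnorm (esym x q)) q ^+ q by rewrite rootqX ?cnorm_ge0.
apply: lerXn2r; rewrite ?nnegrE ?rootq_ge0 ?Ssum_ge0 //.
have qM' : (q.-1 < #|I|)%N by lia.
rewrite /Ssum (bigD1 (Ordinal qM')) //= prednK //.
rewrite lerDl; apply: sumr_ge0 => j _; exact: rootq_ge0.
Qed.

Definition Kc : RR := #|{set I}|%:R.

Lemma Kc_ge1 : 1 <= Kc.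
Proof. by rewrite /Kc ler1n; apply/card_gt0P; exists set0. Qed.

Lemma Ssum_le_mx : Ssum <= #|I|%:R * Kc * mx x.
Proof.
have K1 := Kc_ge1; have m0 := mx_ge0 x.
apply: le_trans (_ : Ssum <= \sum_(q < #|I|) Kc * mx x) _; last first.
  by rewrite sumr_const card_ord -(mulr_natl (Kc * mx x)) mulrA.
apply: ler_sum => q _; apply: rootq_le; rewrite ?cnorm_ge0 //.
  by apply: mulr_ge0 => //; lra.
apply: le_trans (esym_bound x q.+1) _.
rewrite exprMn; apply: ler_wpM2r; first exact: exprn_ge0.
by rewrite -[X in X <= _]expr1; apply: ler_weXn2l.
Qed.

End Family.
Module Alg.
Import mpoly.

Lemma mmap_ext n (h1 h2 : 'I_n -> CC) (p : {mpoly int[n]}) :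
  h1 =1 h2 -> mmap intr h1 p = mmap intr h2 p.
Proof. by move=> e; rewrite /mmap; apply: eq_bigr => m _; congr (_ * _); exact: mmap1_eq. Qed.

Lemma comp_eval n k (p : {mpoly int[n]}) (lq : n.-tuple {mpoly int[k]}) (h : 'I_k -> CC) :
  mmap intr h (p \mPo lq) = mmap intr (fun i => mmap intr h (tnth lq i)) p.
Proof.
rewrite comp_mpolyEX raddf_sum /= {2}/mmap; apply: eq_bigr => m _.
rewrite mmapZ comp_mpolyX rmorph_prod /mmap1; congr (_ * _).
by apply: eq_bigr => i _; rewrite rmorphXn.
Qed.

Lemma mesym_eval n (h : 'I_n -> CC) k :
  mmap intr h (mesym n int k) = \sum_(A : {set 'I_n} | #|A| == k) \prod_(i in A) h i.
Proof.
rewrite /mesym rmorph_sum; apply: eq_bigr => A _; rewrite rmorph_prod.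
by apply: eq_bigr => i _ /=; rewrite mmapX mmap1U.
Qed.

Lemma mesym_evalC n (h : 'I_n -> CC) k :
  (mesym n CC k).@[h] = \sum_(A : {set 'I_n} | #|A| == k) \prod_(i in A) h i.
Proof.
rewrite /mesym rmorph_sum; apply: eq_bigr => A _ /=.
rewrite (big_morph _ (@mevalM n CC h) (meval1 h)).
by apply: eq_bigr => i _; rewrite mevalXU.
Qed.

Lemma coefsE N (al : 'I_N -> CC) (i : 'I_N) :
  coefs al i = (-1) ^+ i.+1 * mmap intr al (mesym N int i.+1).
Proof.
have hi : (i.+1 < N.+1)%N by rewrite ltnS ltn_ord.
have := mroots_coeff [tuple al i | i < N] (inord i.+1).
rewrite inordK // big_tuple.
rewrite (eq_bigr (fun j => 'X - (al j)%:P)); last by move=> j _; rewrite tnth_mktuple.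
rewrite /coefs /polyQ => ->; congr (_ * _).
rewrite mesym_eval -mesym_evalC; apply: meval_eq => j; exact: tnth_mktuple.
Qed.

Lemma sym_eval N (p : {mpoly int[N]}) : p \is symmetric ->
  exists D : {mpoly int[N]}, forall al : 'I_N -> CC, evalA al D = mmap intr al p.
Proof.
move=> sp.
exists (symf p \mPo [tuple ((-1) ^+ i.+1 : int) *: 'X_i | i < N]) => al.
rewrite /evalA -/(mmap intr (coefs al) _) comp_eval.
rewrite {2}(symfP sp) comp_eval; apply: mmap_ext => i.
rewrite !tnth_mktuple mmapZ mmapX mmap1U coefsE mulrA.
by rewrite rmorphXn rmorphN rmorph1 -exprMn mulrNN mulr1 expr1n mul1r.
Qed.

End Alg.
Module Alg2.
Import mpoly.

Definition esymR (R : comNzRingType) (I : finType) (Y : I -> R) q :=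
  \sum_(A : {set I} | #|A| == q) \prod_(i in A) Y i.

Lemma esymR_map (R S : comNzRingType) (I : finType) (Y : I -> R)
  (f : {rmorphism R -> S}) q : f (esymR Y q) = esymR (fun i => f (Y i)) q.
Proof.
rewrite /esymR rmorph_sum; apply: eq_bigr => A _; exact: rmorph_prod.
Qed.

Lemma esymR_morph (R : comNzRingType) (I : finType) (Y : I -> R)
  (f : {rmorphism R -> R}) (sg : I -> I) q :
  injective sg -> (forall i, f (Y i) = Y (sg i)) -> f (esymR Y q) = esymR Y q.
Proof.
move=> sinj hY; rewrite esymR_map /esymR.
rewrite [RHS](reindex_inj (imset_inj sinj)) /=.
apply: eq_big => A; first by rewrite card_imset.
move=> _; rewrite big_imset /=; last by move=> x y _ _; apply: sinj.
by apply: eq_bigr => i _; rewrite hY.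
Qed.

Lemma msymXU n (s : {perm 'I_n}) (j : 'I_n) : msym s ('X_j : {mpoly int[n]}) = 'X_(s j).
Proof.
rewrite msymX; congr mpolyX; apply/mnmP => i; rewrite mnmE !mnm1E.
congr nat_of_bool; apply/eqP/eqP => [->|<-]; by rewrite ?permKV ?permK.
Qed.

Definition sym_coef N (p : {mpoly int[N]}) : {mpoly int[N]} :=
  symf p \mPo [tuple ((-1) ^+ i.+1 : int) *: 'X_i | i < N].

Lemma sym_coefE N (p : {mpoly int[N]}) al : p \is symmetric ->
  evalA al (sym_coef p) = mmap intr al p.
Proof.
move=> sp.
rewrite /evalA -/(mmap intr (coefs al) _) Alg.comp_eval.
rewrite {2}(symfP sp) Alg.comp_eval; apply: Alg.mmap_ext => i.
rewrite !tnth_mktuple mmapZ mmapX mmap1U Alg.coefsE mulrA.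
by rewrite rmorphXn rmorphN rmorph1 -exprMn mulrNN mulr1 expr1n mul1r.
Qed.

Section Fam3.
Variables N r : nat.

Definition X3 (t : {ffun 'I_(r + r) -> 'I_N}) : {mpoly int[N]} :=
  if injectiveb t then \prod_(nu < r) ('X_(t (lshift r nu)) - 'X_(t (rshift r nu))) else 0.

Definition x3 (al : 'I_N -> CC) (t : {ffun 'I_(r + r) -> 'I_N}) : CC :=
  if injectiveb t then \prod_(nu < r) (al (t (lshift r nu)) - al (t (rshift r nu))) else 0.

Lemma X3_eval al t : mmap intr al (X3 t) = x3 al t.
Proof.
rewrite /X3 /x3; case: ifP => _; last by rewrite rmorph0.
rewrite rmorph_prod; apply: eq_bigr => nu _ /=.
by rewrite rmorphB /= !mmapX !mmap1U.
Qed.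

Lemma X3_sym q : esymR X3 q \is symmetric.
Proof.
apply/issymP => s.
pose sg (t : {ffun 'I_(r + r) -> 'I_N}) := [ffun k => s (t k)].
apply: (@esymR_morph _ _ X3 (msym s) sg).
  move=> t1 t2 /ffunP e; apply/ffunP => k; move: (e k); rewrite !ffunE.
  exact: perm_inj.
move=> t; rewrite /X3.
have -> : injectiveb (sg t) = injectiveb t.
  apply/injectiveP/injectiveP => h x y.
    by move=> e; apply: h; rewrite !ffunE e.
  by rewrite !ffunE => /perm_inj; apply: h.
case: ifP => _; last by rewrite rmorph0.
rewrite rmorph_prod; apply: eq_bigr => nu _.
by rewrite rmorphB /= !msymXU !ffunE.
Qed.

Definition D3 q := sym_coef (esymR X3 q).

Lemma D3E al q : evalA al (D3 q) = esym (x3 al) q.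
Proof.
rewrite /D3 sym_coefE ?X3_sym //.
have := esymR_map X3 (mmap intr al : {rmorphism _ -> CC}) q => /= ->.
by rewrite /esymR /esym; apply: eq_bigr => A _; apply: eq_bigr => t _; rewrite X3_eval.
Qed.

End Fam3.

Section Fam4.
Variables N k : nat.

Definition Y4 (T : {set 'I_N}) : {poly {mpoly int[N]}} :=
  if #|T| == k.+1 then \prod_(b in T) ('X - ('X_b)%:P) else 0.

Definition y4 (al : 'I_N -> CC) (z : CC) (T : {set 'I_N}) : CC :=
  if #|T| == k.+1 then \prod_(b in T) (z - al b) else 0.

Lemma Y4_sym q d : (esymR Y4 q)`_d \is symmetric.
Proof.
apply/issymP => s.
have e : map_poly (msym s) (esymR Y4 q) = esymR Y4 q.
  apply: (@esymR_morph _ _ Y4 (map_poly (msym s)) (fun T => [set s x | x in T])).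
    by apply: imset_inj; exact: perm_inj.
  move=> T; rewrite /Y4 card_imset; last exact: perm_inj.
  case: ifP => _; last by rewrite rmorph0.
  rewrite rmorph_prod big_imset /=; last by move=> x y _ _; apply: perm_inj.
  apply: eq_bigr => b _.
  by rewrite rmorphB /= map_polyX map_polyC /= msymXU.
by rewrite -[in RHS]e coef_map.
Qed.

Definition sig4 q : {mpoly int[N.+1]} :=
  \sum_(d < size (esymR Y4 q))
     (sym_coef ((esymR Y4 q)`_d) \mPo [tuple 'X_(lift ord_max i) | i < N])
       * 'X_ord_max ^+ d.

Lemma sig4E al z q : evalAZ al z (sig4 q) = esym (y4 al z) q.
Proof.
set h := fun kk : 'I_N.+1 => if unlift ord_max kk is Some k' then coefs al k' else z.
have -> : evalAZ al z (sig4 q) = mmap intr h (sig4 q) by [].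
rewrite /sig4 rmorph_sum /=.
set E := esymR Y4 q.
set g : {rmorphism _ -> CC} := mmap intr al.
have -> : esym (y4 al z) q = (map_poly g E).[z].
  rewrite /E -horner_evalE.
  rewrite (esymR_map Y4 (map_poly g) q).
  rewrite (esymR_map (fun T => map_poly g (Y4 T)) (horner_eval z) q).
  rewrite /esym /esymR.
  apply: eq_bigr => A _; apply: eq_bigr => T _ /=.
  rewrite horner_evalE /Y4 /y4; case: ifP => _; last by rewrite !rmorph0 horner0.
  rewrite !rmorph_prod horner_prod; apply: eq_bigr => b _.
  by rewrite rmorphB /= map_polyX map_polyC /= !hornerE mmapX mmap1U.
rewrite (@horner_coef_wide _ (size E)); last exact: size_poly.
apply: eq_bigr => d _; rewrite rmorphM rmorphXn /= mmapX mmap1U /h unlift_none.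
rewrite coef_map /=; congr (_ * _).
rewrite Alg.comp_eval -(sym_coefE al (Y4_sym q d)).
rewrite /evalA -/(mmap intr (coefs al) _); apply: Alg.mmap_ext => i.
by rewrite tnth_mktuple mmapX mmap1U /h liftK.
Qed.

End Fam4.
End Alg2.
Lemma rdisc_mx N (al : 'I_N -> CC) r : rdisc al r = mx (@Alg2.x3 N r al).
Proof.
apply/le_anti/andP; split.
  apply: bigmax_leP; first exact: mx_ge0.
  move=> t tinj; apply: le_trans (mx_ge _ t).
  by rewrite /Alg2.x3 tinj cnorm_prod.
apply: bigmax_leP; first exact: bigmax_ge0.
move=> t _; rewrite /Alg2.x3; case: ifP => tinj; last by rewrite cnorm0 bigmax_ge0.
rewrite cnorm_prod.
exact: (@le_bigmaxP _ (fun t : {ffun 'I_(r + r) -> 'I_N} => injectiveb t)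
    (fun t : {ffun 'I_(r + r) -> 'I_N} =>
     \prod_(nu < r) cdist (al (t (lshift r nu))) (al (t (rshift r nu)))) t tinj).
Qed.

Lemma y4_norm N k (al : 'I_N -> CC) j T :
  cnorm (Alg2.y4 k al (al j) T) = if #|T| == k.+1 then pj al j T else 0.
Proof.
rewrite /Alg2.y4; case: ifP => _; last exact: cnorm0.
by rewrite cnorm_prod.
Qed.

Unset Implicit Arguments. Set Strict Implicit.

Theorem theorem2 (N : nat) (hN : (2 <= N)%N) :
  (* (i) *)
  (exists c1 c2 : RR, 0 < c1 /\ 0 < c2 /\
     forall al : 'I_N -> CC, exists j : 'I_N,
       forall i : nat, (i.*2 <= N)%N -> sim c1 c2 (Lloc al i j) (Labs al i))
  /\
  (* (ii) *)
  (exists c1 c2 : RR, 0 < c1 /\ 0 < c2 /\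
     forall al : 'I_N -> CC, forall r : nat, (1 <= r)%N -> (r.*2 <= N)%N ->
       sim c1 c2 (rdisc al r) (\prod_(i < r) Labs al i))
  /\
  (* (iii) *)
  (forall r : nat, (1 <= r)%N -> (r.*2 <= N)%N ->
     exists h : nat, (0 < h)%N /\
     exists D : 'I_h -> mpoly.mpoly N int,
     exists c1 c2 : RR, 0 < c1 /\ 0 < c2 /\
       forall al : 'I_N -> CC,
         sim c1 c2 (rdisc al r)
           (\sum_(q < h) rootq (cnorm (evalA al (D q))) q.+1))
  /\
  (* (iv) *)
  (forall k : nat, (k <= N - 2)%N ->
     exists m : nat, (0 < m)%N /\
     exists sg : 'I_m -> mpoly.mpoly N.+1 int,
     exists c1 c2 : RR, 0 < c1 /\ 0 < c2 /\
       forall al : 'I_N -> CC, forall j : 'I_N,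
         sim c1 c2 (\prod_(i < k.+1) Lloc al i j)
           (\sum_(i < m) rootq (cnorm (evalAZ al (al j) (sg i))) i.+1)).
Proof.
have N0 : (0 < N)%N by lia.
have j0 : 'I_N := Ordinal N0.
split.
  exists 1, 2; split; first lra; split; first lra.
  move=> al; have [j hj] := part_i al hN; exists j => i hi; split.
    by rewrite mul1r; exact: Labs_le.
  exact: hj i hi.
split.
  set K : RR := (2 ^+ N.+1) ^+ N.
  have K0 : 0 < K by rewrite /K; do 2 apply: exprn_gt0; lra.
  exists (1 / K), 1; split; first by rewrite divr_gt0 //; lra.
  split; first lra.
  move=> al r r1 r2; split; last by rewrite mul1r; exact: rdisc_upper.
  have rN : (r + r <= N)%N by rewrite addnn.
  have h1 := rdisc_lower al N0 rN.
  have hK : (2 ^+ r.+1) ^+ r <= K.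
    rewrite /K -!exprM; apply: ler_weXn2l; first lra.
    by apply: leq_mul; lia.
  have R0 : 0 <= rdisc al r by exact: bigmax_ge0.
  have h2 : \prod_(i < r) Labs al i <= K * rdisc al r.
    apply: le_trans h1 _; apply: ler_wpM2r => //.
  rewrite mul1r; rewrite ler_pdivrMl //.
split.
  move=> r r1 r2.
  set I3 := ({ffun 'I_(r + r) -> 'I_N}).
  exists #|I3|; split.
    by apply/card_gt0P; exists [ffun=> j0].
  exists (fun q : 'I_#|I3| => Alg2.D3 N r q.+1).
  set M : RR := #|I3|%:R * Kc I3.
  have M0 : 0 < M.
    rewrite /M; apply: mulr_gt0; last exact: lt_le_trans ltr01 (Kc_ge1 I3).
    by rewrite ltr0n; apply/card_gt0P; exists [ffun=> j0].
  exists (1 / M), 2; split; first by rewrite divr_gt0 //; lra.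
  split; first lra.
  move=> al.
  have -> : \sum_(q < #|I3|) rootq (cnorm (evalA al (Alg2.D3 N r q.+1))) q.+1
            = Ssum (@Alg2.x3 N r al).
    by apply: eq_bigr => q _; rewrite Alg2.D3E.
  rewrite rdisc_mx; split; last exact: mx_le_Ssum.
  have := Ssum_le_mx (@Alg2.x3 N r al); rewrite -/M.
  have := mx_ge0 (@Alg2.x3 N r al).
  move=> m0 h; rewrite mul1r ler_pdivrMl //.
move=> k hk.
set I4 := ({set 'I_N}).
exists #|I4|; split.
  by apply/card_gt0P; exists set0.
exists (fun i : 'I_#|I4| => Alg2.sig4 N k i.+1).
set M : RR := #|I4|%:R * Kc I4.
have M0 : 0 < M.
  rewrite /M; apply: mulr_gt0; last exact: lt_le_trans ltr01 (Kc_ge1 I4).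
  by rewrite ltr0n; apply/card_gt0P; exists set0.
exists (1 / M), (2 ^+ k.+2); split; first by rewrite divr_gt0 //; lra.
split; first by apply: exprn_gt0; lra.
move=> al j.
have -> : \sum_(i < #|I4|) rootq (cnorm (evalAZ al (al j) (Alg2.sig4 N k i.+1))) i.+1
          = Ssum (Alg2.y4 k al (al j)).
  by apply: eq_bigr => q _; rewrite Alg2.sig4E.
set y := Alg2.y4 k al (al j).
have P0 : 0 <= \prod_(i < k.+1) Lloc al i j by apply: prodr_ge0 => i _; exact: Lloc_ge0.
have hup : mx y <= \prod_(i < k.+1) Lloc al i j.
  apply: bigmax_leP => // T _; rewrite y4_norm; case: ifP => // /eqP Tk.
  exact: pj_upper.
have hlo : \prod_(i < k.+1) Lloc al i j <= 2 ^+ k.+1 * mx y.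
  have kN : (k.+1 < N)%N by lia.
  have [T [Tk hT]] := pj_lower al j kN.
  apply: le_trans hT _; apply: ler_wpM2l; first by apply: exprn_ge0; lra.
  by apply: le_trans (mx_ge y T); rewrite y4_norm Tk eqxx.
have hS := mx_le_Ssum y.
have hS2 := Ssum_le_mx y; rewrite -/M in hS2.
have m0 := mx_ge0 y.
split.
  rewrite mul1r ler_pdivrMl //; apply: le_trans hS2 _.
  by apply: ler_wpM2l; [lra | exact: hup].
apply: le_trans hlo _; rewrite !exprS.
have p0 : 0 <= (2 : RR) ^+ k by apply: exprn_ge0; lra.
move: p0 hS; set p := (2 : RR) ^+ k; set S := Ssum y; set w := mx y => p0 hS.
nra.
Qed.
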